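(* $\widetilde{\mathbb{R}}_{sm}$, with the partial order $\le$ and with join $r\vee s=\max(r,s)$ and meet $r\wedge s=\min(r,s)$, is an $l$-ring (a partially ordered ring that is a lattice for its order).
   Context: Let $I=(0,1]$. $\widetilde{\mathbb{R}}_{sm}=\mathcal{E}_{M,sm}/\mathcal{N}_{sm}$ where $\mathcal{E}_{M,sm}$ is the set of smooth $(r_\varepsilon)_{\varepsilon\in I}\in\mathbb{R}^I$ with $|r_\varepsilon|=O(\varepsilon^{-N})$ for some $N$, and $\mathcal{N}_{sm}$ those smooth nets with $|r_\varepsilon|=O(\varepsilon^m)$ for all $m$. Similarly $\widetilde{\mathbb{R}}_{co}$ is defined with continuous nets; the natural map $\tau_{sm}:\widetilde{\mathbb{R}}_{sm}\to\widetilde{\mathbb{R}}_{co}$, $[(r_\varepsilon)]\mapsto[(r_\varepsilon)]$, is a ring isomorphism. For $r,s\in\widetilde{\mathbb{R}}_{sm}$, $r\le s$ means there are representatives with $r_\varepsilon\le s_\varepsilon$ for all $\varepsilon\in I$. For $r=[(r_\varepsilon)_\varepsilon]$, $s=[(s_\varepsilon)_\varepsilon]$: $\min(r,s)=\tau_{sm}^{-1}([(\min(r_\varepsilon,s_\varepsilon))_\varepsilon])$, $\max(r,s)=\tau_{sm}^{-1}([(\max(r_\varepsilon,s_\varepsilon))_\varepsilon])$. *)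

(* Defs.v *)
From Stdlib Require Import Reals.
From Coquelicot Require Import Coquelicot.
Open Scope R_scope.

(* A net (r_eps)_{eps in I}, I = (0,1], is represented by a function R -> R;
   only its values on I matter. *)
Definition net := R -> R.

Definition inI (e : R) : Prop := 0 < e <= 1.

Definition smooth_net (r : net) : Prop :=
  exists d : R, 0 < d /\
    forall (n : nat) (x : R), 0 < x < 1 + d -> ex_derive_n r n x.

Definition moderate (r : net) : Prop :=
  exists (N : nat) (C e0 : R), 0 < e0 <= 1 /\
    forall e, 0 < e < e0 -> Rabs (r e) <= C * / (e ^ N).

Definition negligible (r : net) : Prop :=
  forall m : nat, exists (C e0 : R), 0 < e0 <= 1 /\
    forall e, 0 < e < e0 -> Rabs (r e) <= C * e ^ m.

Definition E_sm (r : net) : Prop := smooth_net r /\ moderate r.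
Definition N_sm (r : net) : Prop := smooth_net r /\ negligible r.

(* equality in R~_sm = E_{M,sm} / N_sm of the classes of r and s *)
Definition eq_sm (r s : net) : Prop := N_sm (fun e => r e - s e).

Definition add_net (r s : net) : net := fun e => r e + s e.
Definition mul_net (r s : net) : net := fun e => r e * s e.
Definition zero_net : net := fun _ => 0.

Definition le_sm (r s : net) : Prop :=
  exists r' s' : net, E_sm r' /\ E_sm s' /\ eq_sm r r' /\ eq_sm s s' /\
    forall e, inI e -> r' e <= s' e.

(* m represents min([r],[s]) = tau_sm^{-1}([(min(r_eps,s_eps))_eps]):
   m is a smooth moderate net whose class in R~_co equals the class of the
   continuous net (min(r_eps,s_eps))_eps, i.e. their difference is negligible. *)
Definition is_min_sm (r s m : net) : Prop :=
  E_sm m /\ negligible (fun e => m e - Rmin (r e) (s e)).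

Definition is_max_sm (r s m : net) : Prop :=
  E_sm m /\ negligible (fun e => m e - Rmax (r e) (s e)).

(* Main.v *)
Require Import Defs.
From Stdlib Require Import Reals.
From Coquelicot Require Import Coquelicot.
From Stdlib Require Import Lra FunctionalExtensionality.
Open Scope R_scope.

Fixpoint Dn (n : nat) (U : R -> Prop) (f : R -> R) : Prop :=
  match n with
  | O => True
  | S n => (forall x, U x -> ex_derive f x) /\ Dn n U (Derive f)
  end.

Lemma Dn_S n U f : Dn (S n) U f -> Dn n U f.
Proof.
  revert f; induction n as [|n IH]; intros f H; simpl in *; auto.
  destruct H as [H1 [H2 H3]]. split; auto.
Qed.

Lemma Dn_sub n U V f : (forall x, V x -> U x) -> Dn n U f -> Dn n V f.
Proof.
  intros HVU; revert f; induction n as [|n IH]; intros f H; simpl in *; auto.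
  destruct H; split; auto.
Qed.

Lemma loc_eq (U : R -> Prop) (f g : R -> R) (x : R) : open U -> U x -> (forall y, U y -> f y = g y) ->
  locally x (fun t => f t = g t).
Proof.
  intros HU Ux Hfg. destruct (HU x Ux) as [eps Heps]. exists eps.
  intros y Hy. apply Hfg, Heps, Hy.
Qed.

Lemma Dn_ext n U f g : open U -> (forall x, U x -> f x = g x) -> Dn n U f -> Dn n U g.
Proof.
  intros HU; revert f g; induction n as [|n IH]; intros f g Hfg H; simpl in *; auto.
  destruct H as [H1 H2]; split.
  - intros x Ux. apply (ex_derive_ext_loc f g); auto. apply (loc_eq U); auto.
  - apply (IH (Derive f)); auto. intros x Ux. apply Derive_ext_loc. apply (loc_eq U); auto.
Qed.

Lemma Dn_ex n U f x : Dn n U f -> U x -> ex_derive_n f n x.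
Proof.
  revert f; induction n as [|n IH]; intros f H Ux; simpl; auto.
  destruct H as [H1 H2]. destruct n as [|n].
  - simpl. auto.
  - specialize (IH _ H2 Ux). simpl in IH |- *.
    assert (E : Derive_n f (S n) = Derive_n (Derive f) n).
    { apply functional_extensionality; intro y.
      rewrite <- Nat.add_1_r, <- (Derive_n_comp f n 1). reflexivity. }
    simpl in E. rewrite E. exact IH.
Qed.

Lemma ex_Dn n U f : (forall k x, U x -> ex_derive_n f k x) -> Dn n U f.
Proof.
  revert f; induction n as [|n IH]; intros f H; simpl; auto.
  split.
  - intros x Ux. exact (H 1%nat x Ux).
  - apply IH. intros k x Ux. destruct k as [|k]; simpl; auto.
    assert (E : Derive_n f (S k) = Derive_n (Derive f) k).
    { apply functional_extensionality; intro y.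
      rewrite <- Nat.add_1_r, <- (Derive_n_comp f k 1). reflexivity. }
    rewrite <- E. exact (H (S (S k)) x Ux).
Qed.

Lemma Dn_const n U c : open U -> Dn n U (fun _ => c).
Proof.
  intros HU; revert c; induction n as [|n IH]; intros c; simpl; auto.
  split.
  - intros; apply ex_derive_const.
  - apply (Dn_ext _ _ (fun _ => 0)); auto. intros; rewrite Derive_const; auto.
Qed.

Lemma Dn_id n U : open U -> Dn n U (fun x => x).
Proof.
  intros HU; destruct n as [|n]; simpl; auto. split.
  - intros; apply ex_derive_id.
  - apply (Dn_ext _ _ (fun _ => 1)); auto. 2: apply Dn_const; auto.
    intros; rewrite <- (Derive_id x); reflexivity.
Qed.

Lemma Dn_plus n U f g : open U -> Dn n U f -> Dn n U g -> Dn n U (fun x => f x + g x).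
Proof.
  intros HU; revert f g; induction n as [|n IH]; intros f g Hf Hg; simpl in *; auto.
  destruct Hf as [Hf1 Hf2], Hg as [Hg1 Hg2]. split.
  - intros; apply (ex_derive_plus (K:=R_AbsRing) (V:=R_NormedModule) f g); auto.
  - apply (Dn_ext _ _ (fun x => Derive f x + Derive g x)); auto.
    intros x Ux. rewrite Derive_plus; auto.
Qed.

Lemma Dn_mult n U f g : open U -> Dn n U f -> Dn n U g -> Dn n U (fun x => f x * g x).
Proof.
  intros HU; revert f g; induction n as [|n IH]; intros f g Hf Hg; auto.
  pose proof (Dn_S _ _ _ Hf) as Hf'. pose proof (Dn_S _ _ _ Hg) as Hg'.
  destruct Hf as [Hf1 Hf2], Hg as [Hg1 Hg2]. split.
  - intros; apply ex_derive_mult; auto.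
  - apply (Dn_ext _ _ (fun x => Derive f x * g x + f x * Derive g x)); auto.
    + intros x Ux. rewrite Derive_mult; auto.
    + apply Dn_plus; auto.
Qed.

Lemma Dn_comp n U V h f : open U -> open V -> (forall x, U x -> V (f x)) ->
  Dn n V h -> Dn n U f -> Dn n U (fun x => h (f x)).
Proof.
  intros HU HV HUV; revert h f HUV; induction n as [|n IH]; intros h f HUV Hh Hf; auto.
  pose proof (Dn_S _ _ _ Hf) as Hf'.
  destruct Hf as [Hf1 Hf2], Hh as [Hh1 Hh2]. split.
  - intros; apply ex_derive_comp; auto.
  - apply (Dn_ext _ _ (fun x => Derive f x * Derive h (f x))); auto.
    + intros x Ux. rewrite (Derive_comp h f); auto.
    + apply Dn_mult; auto.
Qed.

Lemma Dn_exp n U : open U -> Dn n U exp.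
Proof.
  intros HU; induction n as [|n IH]; simpl; auto. split.
  - intros x _. eexists; apply is_derive_exp.
  - apply (Dn_ext _ _ exp); auto. intros x _. symmetry. apply is_derive_unique, is_derive_exp.
Qed.

Definition Pos (x : R) : Prop := 0 < x.
Lemma open_Pos : open Pos.
Proof. apply open_gt. Qed.

Lemma Dn_inv n : Dn n Pos (fun x => / x).
Proof.
  induction n as [|n IH]; simpl; auto. split.
  - intros x Hx. auto_derive. unfold Pos in Hx; lra.
  - apply (Dn_ext _ _ (fun x => (-1) * ((/ x) * (/ x)))). apply open_Pos.
    + intros x Hx. unfold Pos in Hx. rewrite Derive_inv. 2: apply ex_derive_id. 2: lra.
      rewrite Derive_id. field. lra.
    + apply Dn_mult. apply open_Pos. apply Dn_const, open_Pos. apply Dn_mult; auto. apply open_Pos.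
Qed.

Lemma Dn_sqrt n : Dn n Pos sqrt.
Proof.
  induction n as [|n IH]; simpl; auto. split.
  - intros x Hx. unfold Pos in Hx. eexists. apply (is_derive_sqrt (fun y => y) x 1); auto. apply (is_derive_id (K:=R_AbsRing)).
  - apply (Dn_ext _ _ (fun x => / ((fun y => 2 * sqrt y) x))). apply open_Pos.
    + intros x Hx. unfold Pos in Hx. symmetry. apply is_derive_unique.
      replace (/ (2 * sqrt x)) with (1 / (2 * sqrt ((fun y => y) x))) by (simpl; field; pose proof (sqrt_lt_R0 x Hx); lra).
      apply (is_derive_sqrt (fun y => y) x 1); auto. apply (is_derive_id (K:=R_AbsRing)).
    + apply (Dn_comp _ _ Pos). apply open_Pos. apply open_Pos.
      * intros x Hx. unfold Pos in *. pose proof (sqrt_lt_R0 x Hx). lra.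
      * apply Dn_inv.
      * apply Dn_mult. apply open_Pos. apply Dn_const, open_Pos. auto.
Qed.

Definition Id (d : R) (x : R) : Prop := 0 < x < 1 + d.
Lemma open_Id d : open (Id d).
Proof. apply (open_and (fun x => 0 < x) (fun x => x < 1 + d)). apply open_gt. apply open_lt. Qed.

Definition Sm (r : R -> R) : Prop := exists d, 0 < d /\ forall n, Dn n (Id d) r.

Lemma smooth_Sm r : smooth_net r <-> Sm r.
Proof.
  split.
  - intros [d [Hd H]]. exists d. split; auto. intros n. apply ex_Dn.
    intros k x Hx. apply H. exact Hx.
  - intros [d [Hd H]]. exists d. split; auto. intros n x Hx. apply (Dn_ex n (Id d)); auto.
Qed.

Lemma Sm_ext f g : Sm f -> (forall x, f x = g x) -> Sm g.
Proof.
  intros H E. replace g with f; auto. apply functional_extensionality; auto.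
Qed.

Lemma Sm_common f g : Sm f -> Sm g -> exists d, 0 < d /\ (forall n, Dn n (Id d) f) /\ (forall n, Dn n (Id d) g).
Proof.
  intros [d1 [H1 F]] [d2 [H2 G]]. exists (Rmin d1 d2). split.
  { apply Rmin_pos; auto. }
  split; intros n.
  - apply (Dn_sub n (Id d1)); auto. intros x [Hx1 Hx2]. split; auto. pose proof (Rmin_l d1 d2); lra.
  - apply (Dn_sub n (Id d2)); auto. intros x [Hx1 Hx2]. split; auto. pose proof (Rmin_r d1 d2); lra.
Qed.

Lemma Sm_const c : Sm (fun _ => c).
Proof. exists 1. split. lra. intros; apply Dn_const, open_Id. Qed.

Lemma Sm_plus f g : Sm f -> Sm g -> Sm (fun x => f x + g x).
Proof.
  intros Hf Hg. destruct (Sm_common f g Hf Hg) as [d [Hd [F G]]]. exists d; split; auto.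
  intros n; apply Dn_plus; auto. apply open_Id.
Qed.

Lemma Sm_mult f g : Sm f -> Sm g -> Sm (fun x => f x * g x).
Proof.
  intros Hf Hg. destruct (Sm_common f g Hf Hg) as [d [Hd [F G]]]. exists d; split; auto.
  intros n; apply Dn_mult; auto. apply open_Id.
Qed.

Lemma Sm_opp f : Sm f -> Sm (fun x => - f x).
Proof.
  intros Hf. apply (Sm_ext (fun x => (-1) * f x)). apply Sm_mult; auto. apply Sm_const.
  intros; ring.
Qed.

Lemma Sm_minus f g : Sm f -> Sm g -> Sm (fun x => f x - g x).
Proof.
  intros Hf Hg. apply (Sm_ext (fun x => f x + - g x)). apply Sm_plus; auto. apply Sm_opp; auto.
  intros; ring.
Qed.

Lemma Sm_sqrt f : Sm f -> (forall x, 0 < x -> 0 < f x) -> Sm (fun x => sqrt (f x)).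
Proof.
  intros [d [Hd F]] Hp. exists d; split; auto. intros n.
  apply (Dn_comp n (Id d) Pos). apply open_Id. apply open_Pos.
  intros x [Hx _]. apply Hp; auto. apply Dn_sqrt. auto.
Qed.

Definition Ex (x : R) : R := exp (- / x).

Lemma Sm_Ex : Sm Ex.
Proof.
  exists 1; split. lra. intros n. unfold Ex.
  apply (Dn_comp n (Id 1) (fun _ => True)). apply open_Id. apply open_true. auto.
  apply Dn_exp, open_true.
  apply (Dn_ext _ _ (fun x => (-1) * (fun y => / y) ((fun y => y) x))). apply open_Id. intros; simpl; ring.
  apply Dn_mult. apply open_Id. apply Dn_const, open_Id.
  apply (Dn_comp n (Id 1) Pos). apply open_Id. apply open_Pos. intros x [Hx _]; exact Hx.
  apply Dn_inv. apply Dn_id, open_Id.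
Qed.

Definition smax (r s : R -> R) (x : R) : R :=
  (r x + s x + sqrt ((r x - s x) ^ 2 + Ex x * Ex x)) / 2.
Definition smin (r s : R -> R) (x : R) : R :=
  (r x + s x - sqrt ((r x - s x) ^ 2 + Ex x * Ex x)) / 2.

Lemma Ex_pos x : 0 < Ex x.
Proof. apply exp_pos. Qed.

Lemma Sm_sq f : Sm f -> Sm (fun x => sqrt ((f x) ^ 2 + Ex x * Ex x)).
Proof.
  intros Hf. apply Sm_sqrt.
  - apply Sm_plus. apply (Sm_ext (fun x => f x * f x)). apply Sm_mult; auto. intros; ring.
    apply Sm_mult; apply Sm_Ex.
  - intros x _. pose proof (Ex_pos x). pose proof (pow2_ge_0 (f x)). nra.
Qed.

Lemma Sm_smax r s : Sm r -> Sm s -> Sm (smax r s).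
Proof.
  intros Hr Hs. apply (Sm_ext (fun x => (r x + s x + sqrt (((fun y => r y - s y) x) ^ 2 + Ex x * Ex x)) * (/2))).
  apply Sm_mult. apply Sm_plus. apply Sm_plus; auto. apply (Sm_sq (fun y => r y - s y)). apply Sm_minus; auto.
  apply Sm_const. intros; unfold smax; simpl; field.
Qed.

Lemma Sm_smin r s : Sm r -> Sm s -> Sm (smin r s).
Proof.
  intros Hr Hs. apply (Sm_ext (fun x => (r x + s x - sqrt (((fun y => r y - s y) x) ^ 2 + Ex x * Ex x)) * (/2))).
  apply Sm_mult. apply Sm_minus. apply Sm_plus; auto. apply (Sm_sq (fun y => r y - s y)). apply Sm_minus; auto.
  apply Sm_const. intros; unfold smin; simpl; field.
Qed.

Lemma pow_weak e N M : 0 < e <= 1 -> e ^ (N + M) <= e ^ N.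
Proof.
  intros He. rewrite pow_add. pose proof (pow_lt e N (proj1 He)).
  assert (e ^ M <= 1). { rewrite <- (pow1 M). apply pow_incr; lra. }
  pose proof (pow_lt e M (proj1 He)). nra.
Qed.

Lemma inv_weak C e N M : 0 <= C -> 0 < e <= 1 -> C * / e ^ N <= C * / e ^ (N + M).
Proof.
  intros HC He. apply Rmult_le_compat_l; auto. apply Rinv_le_contravar.
  apply pow_lt; lra. apply pow_weak; auto.
Qed.

Lemma mod_norm r : moderate r -> exists N C e0, 0 < e0 <= 1 /\ 0 <= C /\
  forall e, 0 < e < e0 -> Rabs (r e) <= C * / e ^ N.
Proof.
  intros [N [C [e0 [He0 H]]]]. exists N, (Rabs C), e0. split; auto. split. apply Rabs_pos.
  intros e He. eapply Rle_trans. apply H; auto. apply Rmult_le_compat_r. 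
  left; apply Rinv_0_lt_compat, pow_lt; lra. apply Rle_abs.
Qed.

Lemma negl_norm r : negligible r -> forall m, exists C e0, 0 < e0 <= 1 /\ 0 <= C /\
  forall e, 0 < e < e0 -> Rabs (r e) <= C * e ^ m.
Proof.
  intros H m. destruct (H m) as [C [e0 [He0 H1]]]. exists (Rabs C), e0. split; auto. split. apply Rabs_pos.
  intros e He. eapply Rle_trans. apply H1; auto. apply Rmult_le_compat_r.
  left; apply pow_lt; lra. apply Rle_abs.
Qed.

Lemma mod_dom f g : moderate g -> (forall e, 0 < e <= 1 -> Rabs (f e) <= Rabs (g e)) -> moderate f.
Proof.
  intros [N [C [e0 [He0 H]]]] D. exists N, C, e0. split; auto. intros e He.
  eapply Rle_trans. apply D; lra. apply H; auto.
Qed.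

Lemma negl_dom f g : negligible g -> (forall e, 0 < e <= 1 -> Rabs (f e) <= Rabs (g e)) -> negligible f.
Proof.
  intros H D m. destruct (H m) as [C [e0 [He0 H1]]]. exists C, e0. split; auto. intros e He.
  eapply Rle_trans. apply D; lra. apply H1; auto.
Qed.

Lemma mod_const c : moderate (fun _ => c).
Proof.
  exists 0%nat, (Rabs c), 1. split. lra. intros e He. simpl. rewrite Rinv_1. lra.
Qed.

Lemma mod_plus f g : moderate f -> moderate g -> moderate (fun e => f e + g e).
Proof.
  intros Hf Hg. destruct (mod_norm f Hf) as [N1 [C1 [e1 [He1 [HC1 H1]]]]].
  destruct (mod_norm g Hg) as [N2 [C2 [e2 [He2 [HC2 H2]]]]].
  exists (N1 + N2)%nat, (C1 + C2), (Rmin e1 e2). split.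
  { split. apply Rmin_pos; lra. pose proof (Rmin_l e1 e2); lra. }
  intros e He. pose proof (Rmin_l e1 e2). pose proof (Rmin_r e1 e2).
  assert (A1 := H1 e ltac:(lra)). assert (A2 := H2 e ltac:(lra)).
  pose proof (inv_weak C1 e N1 N2 HC1 ltac:(lra)).
  pose proof (inv_weak C2 e N2 N1 HC2 ltac:(lra)). rewrite Nat.add_comm in H4.
  eapply Rle_trans. apply Rabs_triang. lra.
Qed.

Lemma mod_mult f g : moderate f -> moderate g -> moderate (fun e => f e * g e).
Proof.
  intros Hf Hg. destruct (mod_norm f Hf) as [N1 [C1 [e1 [He1 [HC1 H1]]]]].
  destruct (mod_norm g Hg) as [N2 [C2 [e2 [He2 [HC2 H2]]]]].
  exists (N1 + N2)%nat, (C1 * C2), (Rmin e1 e2). split.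
  { split. apply Rmin_pos; lra. pose proof (Rmin_l e1 e2); lra. }
  intros e He. pose proof (Rmin_l e1 e2). pose proof (Rmin_r e1 e2).
  assert (A1 := H1 e ltac:(lra)). assert (A2 := H2 e ltac:(lra)).
  rewrite Rabs_mult, pow_add, Rinv_mult.
  replace (C1 * C2 * (/ e ^ N1 * / e ^ N2)) with ((C1 * / e ^ N1) * (C2 * / e ^ N2)) by ring.
  apply Rmult_le_compat; auto; apply Rabs_pos.
Qed.

Lemma negl_plus f g : negligible f -> negligible g -> negligible (fun e => f e + g e).
Proof.
  intros Hf Hg m. destruct (negl_norm f Hf m) as [C1 [e1 [He1 [HC1 H1]]]].
  destruct (negl_norm g Hg m) as [C2 [e2 [He2 [HC2 H2]]]].
  exists (C1 + C2), (Rmin e1 e2). split.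
  { split. apply Rmin_pos; lra. pose proof (Rmin_l e1 e2); lra. }
  intros e He. pose proof (Rmin_l e1 e2). pose proof (Rmin_r e1 e2).
  assert (A1 := H1 e ltac:(lra)). assert (A2 := H2 e ltac:(lra)).
  eapply Rle_trans. apply Rabs_triang. lra.
Qed.

Lemma negl_mult g f : moderate g -> negligible f -> negligible (fun e => g e * f e).
Proof.
  intros Hg Hf m. destruct (mod_norm g Hg) as [N [C1 [e1 [He1 [HC1 H1]]]]].
  destruct (negl_norm f Hf (m + N)) as [C2 [e2 [He2 [HC2 H2]]]].
  exists (C1 * C2), (Rmin e1 e2). split.
  { split. apply Rmin_pos; lra. pose proof (Rmin_l e1 e2); lra. }
  intros e He. pose proof (Rmin_l e1 e2). pose proof (Rmin_r e1 e2).
  assert (A1 := H1 e ltac:(lra)). assert (A2 := H2 e ltac:(lra)).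
  rewrite Rabs_mult.
  replace (C1 * C2 * e ^ m) with ((C1 * / e ^ N) * (C2 * e ^ (m + N))).
  apply Rmult_le_compat; auto; apply Rabs_pos.
  rewrite pow_add. field. apply pow_nonzero. lra.
Qed.

Lemma sum_last (f : nat -> R) n : (forall k, 0 <= f k) -> f n <= sum_f_R0 f n.
Proof.
  intros H. destruct n as [|n]; simpl. lra.
  assert (0 <= sum_f_R0 f n). { induction n as [|n IH]; simpl. apply H. pose proof (H (S n)); lra. }
  lra.
Qed.

Lemma negl_Ex : negligible (fun x => exp (- / x)).
Proof.
  intros m. exists (INR (Factorial.fact m)), 1. split. lra. intros e He.
  rewrite Rabs_pos_eq by (left; apply exp_pos).
  assert (Hy : 0 <= / e) by (left; apply Rinv_0_lt_compat; lra).
  pose proof (exp_ge_taylor (/ e) m Hy) as T.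
  pose proof (sum_last (fun k => (/ e) ^ k / INR (Factorial.fact k)) m) as L.
  assert (Hf : 0 < INR (Factorial.fact m)) by (apply lt_0_INR, Factorial.lt_O_fact).
  assert (P : (/ e) ^ m / INR (Factorial.fact m) <= exp (/ e)).
  { eapply Rle_trans. apply L. intros k. apply Rmult_le_pos. apply pow_le; auto.
    left; apply Rinv_0_lt_compat, lt_0_INR, Factorial.lt_O_fact. auto. }
  rewrite exp_Ropp.
  assert (Q : 0 < (/ e) ^ m / INR (Factorial.fact m)).
  { apply Rdiv_lt_0_compat; auto. apply pow_lt. apply Rinv_0_lt_compat; lra. }
  eapply Rle_trans. apply Rinv_le_contravar. exact Q. exact P.
  rewrite pow_inv. right. field. split. apply pow_nonzero; lra. lra.
Qed.

Lemma abs_lo x : - Rabs x <= x.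
Proof. pose proof (Rle_abs (- x)). rewrite Rabs_Ropp in H. lra. Qed.

Lemma absle x y : - y <= x <= y -> Rabs x <= Rabs y.
Proof. intros H. eapply Rle_trans. apply Rabs_le; exact H. apply Rle_abs. Qed.

Ltac absf := repeat match goal with |- context [Rabs ?t] =>
  let a := fresh "a" in pose proof (Rle_abs t); pose proof (abs_lo t);
  set (a := Rabs t) in *; clearbody a end.

Lemma max_f a b : a <= Rmax a b /\ b <= Rmax a b /\ (Rmax a b = a \/ Rmax a b = b).
Proof. split. apply Rmax_l. split. apply Rmax_r. unfold Rmax; destruct (Rle_dec a b); auto. Qed.

Lemma min_f a b : Rmin a b <= a /\ Rmin a b <= b /\ (Rmin a b = a \/ Rmin a b = b).
Proof. split. apply Rmin_l. split. apply Rmin_r. unfold Rmin; destruct (Rle_dec a b); auto. Qed.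

Lemma sq_b a b : 0 <= b -> Rabs a <= sqrt (a ^ 2 + b * b) <= Rabs a + b.
Proof.
  intros Hb. split.
  - rewrite <- (sqrt_pow2 (Rabs a)) by apply Rabs_pos. apply sqrt_le_1_alt.
    rewrite pow2_abs. pose proof (pow2_ge_0 a). nra.
  - rewrite <- (sqrt_pow2 (Rabs a + b)) by (pose proof (Rabs_pos a); lra). apply sqrt_le_1_alt.
    pose proof (Rabs_pos a). replace (a ^ 2) with (Rabs a ^ 2). nra.
    apply pow2_abs.
Qed.

Lemma Ex_b x : 0 < x -> 0 < Ex x <= 1.
Proof.
  intros Hx. split. apply Ex_pos. unfold Ex. rewrite <- exp_0. left. apply exp_increasing.
  pose proof (Rinv_0_lt_compat x Hx). lra.
Qed.

Lemma smax_b r s x : Rmax (r x) (s x) <= smax r s x <= Rmax (r x) (s x) + Ex x.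
Proof.
  unfold smax. pose proof (Ex_pos x). destruct (sq_b (r x - s x) (Ex x)) as [A B]; [lra|].
  set (q := sqrt _) in *. clearbody q. destruct (max_f (r x) (s x)) as [M1 [M2 M3]].
  revert A B. unfold Rabs; destruct (Rcase_abs (r x - s x)); intros; destruct M3 as [M|M]; rewrite M in *; lra.
Qed.

Lemma smin_b r s x : Rmin (r x) (s x) - Ex x <= smin r s x <= Rmin (r x) (s x).
Proof.
  unfold smin. pose proof (Ex_pos x). destruct (sq_b (r x - s x) (Ex x)) as [A B]; [lra|].
  set (q := sqrt _) in *. clearbody q. destruct (min_f (r x) (s x)) as [M1 [M2 M3]].
  revert A B. unfold Rabs; destruct (Rcase_abs (r x - s x)); intros; destruct M3 as [M|M]; rewrite M in *; lra.
Qed.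

Lemma Esm_Sm r : E_sm r -> Sm r.
Proof. intros [H _]. apply smooth_Sm; auto. Qed.
Lemma Esm_mod r : E_sm r -> moderate r.
Proof. intros [_ H]; auto. Qed.
Lemma mk_Esm r : Sm r -> moderate r -> E_sm r.
Proof. intros; split; auto. apply smooth_Sm; auto. Qed.

Lemma Esm_plus r s : E_sm r -> E_sm s -> E_sm (fun e => r e + s e).
Proof. intros [A B] [C D]. apply mk_Esm. apply Sm_plus; apply smooth_Sm; auto. apply mod_plus; auto. Qed.
Lemma Esm_mult r s : E_sm r -> E_sm s -> E_sm (fun e => r e * s e).
Proof. intros [A B] [C D]. apply mk_Esm. apply Sm_mult; apply smooth_Sm; auto. apply mod_mult; auto. Qed.
Lemma mod_opp r : moderate r -> moderate (fun e => - r e).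
Proof. intros H. apply (mod_dom _ r); auto. intros; rewrite Rabs_Ropp; lra. Qed.
Lemma Esm_minus r s : E_sm r -> E_sm s -> E_sm (fun e => r e - s e).
Proof. intros [A B] [C D]. apply mk_Esm. apply Sm_minus; apply smooth_Sm; auto.
  apply (mod_dom _ (fun e => r e + - s e)). apply mod_plus; auto. apply mod_opp; auto. intros; right; f_equal. Qed.
Lemma Esm_zero : E_sm zero_net.
Proof. apply mk_Esm. apply (Sm_const 0). apply (mod_const 0). Qed.

Lemma mod_abs r : moderate r -> moderate (fun e => Rabs (r e)).
Proof. intros H. apply (mod_dom _ r); auto. intros; rewrite Rabs_Rabsolu; lra. Qed.
Lemma negl_abs r : negligible r -> negligible (fun e => Rabs (r e)).
Proof. intros H. apply (negl_dom _ r); auto. intros; rewrite Rabs_Rabsolu; lra. Qed.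
Lemma negl_zero : negligible (fun _ => 0).
Proof. intros m. exists 0, 1. split. lra. intros. rewrite Rabs_R0. lra. Qed.

Lemma mod_bd r s : moderate r -> moderate s -> moderate (fun e => Rabs (r e) + Rabs (s e) + 1).
Proof. intros. apply mod_plus. apply mod_plus; apply mod_abs; auto. apply mod_const. Qed.

Lemma Esm_smax r s : E_sm r -> E_sm s -> E_sm (smax r s).
Proof.
  intros [A B] [C D]. apply mk_Esm. apply Sm_smax; apply smooth_Sm; auto.
  apply (mod_dom _ _ (mod_bd r s B D)). intros e He.
  pose proof (smax_b r s e). pose proof (Ex_b e (proj1 He)). destruct (max_f (r e) (s e)) as [M1 [M2 M3]].
  apply absle. absf. lra.
Qed.
Lemma Esm_smin r s : E_sm r -> E_sm s -> E_sm (smin r s).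
Proof.
  intros [A B] [C D]. apply mk_Esm. apply Sm_smin; apply smooth_Sm; auto.
  apply (mod_dom _ _ (mod_bd r s B D)). intros e He.
  pose proof (smin_b r s e). pose proof (Ex_b e (proj1 He)). destruct (min_f (r e) (s e)) as [M1 [M2 M3]].
  apply absle. absf. lra.
Qed.

Lemma eq_of a b : E_sm a -> E_sm b -> negligible (fun e => a e - b e) -> eq_sm a b.
Proof. intros A B H. split; auto. apply smooth_Sm. apply Sm_minus; apply Esm_Sm; auto. Qed.
Lemma eq_negl a b : eq_sm a b -> negligible (fun e => Rabs (a e - b e)).
Proof. intros [_ H]. apply negl_abs; auto. Qed.
Lemma eq_refl' a : E_sm a -> eq_sm a a.
Proof. intros. apply eq_of; auto. apply (negl_dom _ _ negl_zero). intros. right. f_equal. ring. Qed.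
Lemma negl_Ex' : negligible Ex.
Proof. exact negl_Ex. Qed.

Ltac nsum := repeat (apply negl_plus); try assumption.

Lemma p_refl r : E_sm r -> le_sm r r.
Proof. intros H. exists r, r. split; [auto|split; [auto|split; [apply eq_refl'; auto|split; [apply eq_refl'; auto|intros; lra]]]]. Qed.

Lemma p_anti r s : E_sm r -> E_sm s -> le_sm r s -> le_sm s r -> eq_sm r s.
Proof.
  intros Hr Hs [r1 [s1 [_ [_ [E1 [E2 L1]]]]]] [s2 [r2 [_ [_ [E3 [E4 L2]]]]]].
  apply eq_of; auto.
  apply eq_negl in E1, E2, E3, E4.
  apply (negl_dom _ (fun e => Rabs (r e - r1 e) + Rabs (s e - s1 e) + Rabs (s e - s2 e) + Rabs (r e - r2 e))).
  nsum. intros e He. pose proof (L1 e He). pose proof (L2 e He). apply absle. absf. lra.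
Qed.

Lemma p_trans r s t : E_sm r -> E_sm s -> E_sm t -> le_sm r s -> le_sm s t -> le_sm r t.
Proof.
  intros Hr Hs Ht [r1 [s1 [Hr1 [Hs1 [E1 [E2 L1]]]]]] [s2 [t2 [Hs2 [Ht2 [E3 [E4 L2]]]]]].
  exists r1, (fun e => t2 e + (s1 e - s2 e)).
  assert (Ht3 : E_sm (fun e => t2 e + (s1 e - s2 e))) by (apply Esm_plus; auto; apply Esm_minus; auto).
  split; auto. split; auto. split; auto. split.
  - apply eq_of; auto. apply eq_negl in E2, E3, E4.
    apply (negl_dom _ (fun e => Rabs (t e - t2 e) + Rabs (s e - s1 e) + Rabs (s e - s2 e))).
    nsum. intros e He. apply absle. absf. lra.
  - intros e He. pose proof (L1 e He). pose proof (L2 e He). lra.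
Qed.

Lemma p_add r s t : E_sm r -> E_sm s -> E_sm t -> le_sm r s -> le_sm (add_net r t) (add_net s t).
Proof.
  intros Hr Hs Ht [r1 [s1 [Hr1 [Hs1 [E1 [E2 L1]]]]]].
  exists (add_net r1 t), (add_net s1 t). unfold add_net.
  split. apply Esm_plus; auto. split. apply Esm_plus; auto. split; [|split].
  - apply eq_of. apply Esm_plus; auto. apply Esm_plus; auto. apply eq_negl in E1.
    apply (negl_dom _ _ E1). intros e He. apply absle. absf. lra.
  - apply eq_of. apply Esm_plus; auto. apply Esm_plus; auto. apply eq_negl in E2.
    apply (negl_dom _ _ E2). intros e He. apply absle. absf. lra.
  - intros e He. pose proof (L1 e He). lra.
Qed.

Lemma p_mul r s : E_sm r -> E_sm s -> le_sm zero_net r -> le_sm zero_net s -> le_sm zero_net (mul_net r s).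
Proof.
  intros Hr Hs [z1 [r1 [Hz1 [Hr1 [E1 [E2 L1]]]]]] [z2 [s2 [Hz2 [Hs2 [E3 [E4 L2]]]]]].
  set (a := fun e => r1 e - z1 e). set (b := fun e => s2 e - z2 e).
  assert (Ha : E_sm a) by (apply Esm_minus; auto).
  assert (Hb : E_sm b) by (apply Esm_minus; auto).
  exists zero_net, (fun e => a e * b e). split. apply Esm_zero. split. apply Esm_mult; auto.
  split. apply eq_refl', Esm_zero. split.
  - unfold mul_net. apply eq_of. apply Esm_mult; auto. apply Esm_mult; auto.
    destruct E1 as [_ N1], E2 as [_ N2], E3 as [_ N3], E4 as [_ N4].
    apply (negl_dom _ (fun e => r e * ((s e - s2 e) - (zero_net e - z2 e)) + b e * ((r e - r1 e) - (zero_net e - z1 e)))).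
    + apply negl_plus; apply negl_mult; try (apply Esm_mod; auto).
      * apply (negl_dom _ _ (negl_plus _ _ (negl_abs _ N4) (negl_abs _ N3))).
        intros e He; apply absle; absf; lra.
      * apply (negl_dom _ _ (negl_plus _ _ (negl_abs _ N2) (negl_abs _ N1))).
        intros e He; apply absle; absf; lra.
    + intros e He. right. f_equal. unfold a, b, zero_net. ring.
  - intros e He. pose proof (L1 e He). pose proof (L2 e He). unfold zero_net in *. unfold a, b.
    apply Rmult_le_pos; lra.
Qed.

Lemma p_maxex r s : E_sm r -> E_sm s -> exists m, is_max_sm r s m.
Proof.
  intros Hr Hs. exists (smax r s). split. apply Esm_smax; auto.
  apply (negl_dom _ _ negl_Ex'). intros e He. pose proof (smax_b r s e). pose proof (Ex_b e (proj1 He)).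
  apply absle. lra.
Qed.

Lemma p_minex r s : E_sm r -> E_sm s -> exists m, is_min_sm r s m.
Proof.
  intros Hr Hs. exists (smin r s). split. apply Esm_smin; auto.
  apply (negl_dom _ _ negl_Ex'). intros e He. pose proof (smin_b r s e). pose proof (Ex_b e (proj1 He)).
  apply absle. lra.
Qed.

Lemma p_join r s m : E_sm r -> E_sm s -> is_max_sm r s m ->
  le_sm r m /\ le_sm s m /\ forall u, E_sm u -> le_sm r u -> le_sm s u -> le_sm m u.
Proof.
  intros Hr Hs [Hm N].
  pose proof (negl_abs _ N) as NA.
  split; [|split].
  - exists (smin r m), m. split. apply Esm_smin; auto. split; auto. split; [|split].
    + apply eq_of; auto. apply Esm_smin; auto.
      apply (negl_dom _ _ (negl_plus _ _ NA negl_Ex')). intros e He.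
      pose proof (smin_b r m e). pose proof (Ex_b e (proj1 He)).
      destruct (max_f (r e) (s e)) as [M1 [M2 M3]]. destruct (min_f (r e) (m e)) as [M4 [M5 M6]].
      apply absle. absf. destruct M6 as [M|M]; rewrite M in *; lra.
    + apply eq_refl'; auto.
    + intros e He. pose proof (smin_b r m e). pose proof (Rmin_r (r e) (m e)). lra.
  - exists (smin s m), m. split. apply Esm_smin; auto. split; auto. split; [|split].
    + apply eq_of; auto. apply Esm_smin; auto.
      apply (negl_dom _ _ (negl_plus _ _ NA negl_Ex')). intros e He.
      pose proof (smin_b s m e). pose proof (Ex_b e (proj1 He)).
      destruct (max_f (r e) (s e)) as [M1 [M2 M3]]. destruct (min_f (s e) (m e)) as [M4 [M5 M6]].
      apply absle. absf. destruct M6 as [M|M]; rewrite M in *; lra.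
    + apply eq_refl'; auto.
    + intros e He. pose proof (smin_b s m e). pose proof (Rmin_r (s e) (m e)). lra.
  - intros u Hu [r1 [u1 [Hr1 [Hu1 [E1 [E2 L1]]]]]] [s2 [u2 [Hs2 [Hu2 [E3 [E4 L2]]]]]].
    apply eq_negl in E1, E2, E3, E4.
    exists m, (smax u m). split; auto. split. apply Esm_smax; auto. split; [|split].
    + apply eq_refl'; auto.
    + apply eq_of; auto. apply Esm_smax; auto.
      apply (negl_dom _ (fun e => Rabs (m e - Rmax (r e) (s e)) + Rabs (r e - r1 e) + Rabs (u e - u1 e)
               + Rabs (s e - s2 e) + Rabs (u e - u2 e) + Ex e)).
      { nsum. exact negl_Ex'. }
      intros e He. pose proof (L1 e He). pose proof (L2 e He).
      pose proof (smax_b u m e). pose proof (Ex_b e (proj1 He)).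
      destruct (max_f (r e) (s e)) as [M1 [M2 M3]]. destruct (max_f (u e) (m e)) as [M4 [M5 M6]].
      apply absle. absf. destruct M6 as [M|M]; rewrite M in *; destruct M3 as [M'|M']; rewrite M' in *; lra.
    + intros e He. pose proof (smax_b u m e). pose proof (Rmax_r (u e) (m e)). lra.
Qed.

Lemma p_meet r s m : E_sm r -> E_sm s -> is_min_sm r s m ->
  le_sm m r /\ le_sm m s /\ forall u, E_sm u -> le_sm u r -> le_sm u s -> le_sm u m.
Proof.
  intros Hr Hs [Hm N].
  pose proof (negl_abs _ N) as NA.
  split; [|split].
  - exists m, (smax r m). split; auto. split. apply Esm_smax; auto. split; [|split].
    + apply eq_refl'; auto.
    + apply eq_of; auto. apply Esm_smax; auto.
      apply (negl_dom _ _ (negl_plus _ _ NA negl_Ex')). intros e He.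
      pose proof (smax_b r m e). pose proof (Ex_b e (proj1 He)).
      destruct (min_f (r e) (s e)) as [M1 [M2 M3]]. destruct (max_f (r e) (m e)) as [M4 [M5 M6]].
      apply absle. absf. destruct M6 as [M|M]; rewrite M in *; lra.
    + intros e He. pose proof (smax_b r m e). pose proof (Rmax_r (r e) (m e)). lra.
  - exists m, (smax s m). split; auto. split. apply Esm_smax; auto. split; [|split].
    + apply eq_refl'; auto.
    + apply eq_of; auto. apply Esm_smax; auto.
      apply (negl_dom _ _ (negl_plus _ _ NA negl_Ex')). intros e He.
      pose proof (smax_b s m e). pose proof (Ex_b e (proj1 He)).
      destruct (min_f (r e) (s e)) as [M1 [M2 M3]]. destruct (max_f (s e) (m e)) as [M4 [M5 M6]].
      apply absle. absf. destruct M6 as [M|M]; rewrite M in *; lra.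
    + intros e He. pose proof (smax_b s m e). pose proof (Rmax_r (s e) (m e)). lra.
  - intros u Hu [u1 [r1 [Hu1 [Hr1 [E1 [E2 L1]]]]]] [u2 [s2 [Hu2 [Hs2 [E3 [E4 L2]]]]]].
    apply eq_negl in E1, E2, E3, E4.
    exists (smin u m), m. split. apply Esm_smin; auto. split; auto. split; [|split].
    + apply eq_of; auto. apply Esm_smin; auto.
      apply (negl_dom _ (fun e => Rabs (m e - Rmin (r e) (s e)) + Rabs (u e - u1 e) + Rabs (r e - r1 e)
               + Rabs (u e - u2 e) + Rabs (s e - s2 e) + Ex e)).
      { nsum. exact negl_Ex'. }
      intros e He. pose proof (L1 e He). pose proof (L2 e He).
      pose proof (smin_b u m e). pose proof (Ex_b e (proj1 He)).
      destruct (min_f (r e) (s e)) as [M1 [M2 M3]]. destruct (min_f (u e) (m e)) as [M4 [M5 M6]].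
      apply absle. absf. destruct M6 as [M|M]; rewrite M in *; destruct M3 as [M'|M']; rewrite M' in *; lra.
    + apply eq_refl'; auto.
    + intros e He. pose proof (smin_b u m e). pose proof (Rmin_r (u e) (m e)). lra.
Qed.

Theorem proposition4p13 :
  (* <= is a partial order on R~_sm *)
  (forall r, E_sm r -> le_sm r r) /\
  (forall r s, E_sm r -> E_sm s -> le_sm r s -> le_sm s r -> eq_sm r s) /\
  (forall r s t, E_sm r -> E_sm s -> E_sm t ->
     le_sm r s -> le_sm s t -> le_sm r t) /\
  (* compatibility with the ring operations *)
  (forall r s t, E_sm r -> E_sm s -> E_sm t ->
     le_sm r s -> le_sm (add_net r t) (add_net s t)) /\
  (forall r s, E_sm r -> E_sm s ->
     le_sm zero_net r -> le_sm zero_net s -> le_sm zero_net (mul_net r s)) /\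
  (* max and min are defined (tau_sm^{-1} applies) *)
  (forall r s, E_sm r -> E_sm s -> exists m, is_max_sm r s m) /\
  (forall r s, E_sm r -> E_sm s -> exists m, is_min_sm r s m) /\
  (* max(r,s) is the join (least upper bound) *)
  (forall r s m, E_sm r -> E_sm s -> is_max_sm r s m ->
     le_sm r m /\ le_sm s m /\
     forall u, E_sm u -> le_sm r u -> le_sm s u -> le_sm m u) /\
  (* min(r,s) is the meet (greatest lower bound) *)
  (forall r s m, E_sm r -> E_sm s -> is_min_sm r s m ->
     le_sm m r /\ le_sm m s /\
     forall u, E_sm u -> le_sm u r -> le_sm u s -> le_sm u m).
Proof.
  split. exact p_refl. split. exact p_anti. split. exact p_trans. split. exact p_add.
  split. exact p_mul. split. exact p_maxex. split. exact p_minex. split. exact p_join. exact p_meet.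
Qed.
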